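(* Let $n\ge 7$ and let $D$ be a total dominating set of $G_{n,4}$. Then $|D\cap H_i^4|\ge 4$ for every $i$ with $1\le i\le n$. Moreover, if for some $i$ with $1\le i\le n$ we have $|N(v)\cap D|=1$ for every vertex $v\in H_i^4$, then $D\setminus (D\cap H_i^4)$ is a total dominating set of $G_i^4$.
   Context: $G_{n,m}=C_n\times C_m$ (Cartesian product of cycles) has vertex set $\{x_{ij}: 1\le i\le n,\ 1\le j\le m\}$, where $x_{ij}$ and $x_{i'j'}$ are adjacent iff either $i=i'$ and $j,j'$ are adjacent in the cycle $C_m$ on $\{1,\dots,m\}$, or $j=j'$ and $i,i'$ are adjacent in the cycle $C_n$ on $\{1,\dots,n\}$. $N(v)$ is the open neighbourhood of $v$. Let $Y_i=\{x_{ij}:1\le j\le m\}$ and $H_i^j=Y_i\cup Y_{i+1}\cup\cdots\cup Y_{i+j-1}$ (first indices modulo $n$). $G_i^j$ is the graph obtained from $G_{n,4}-H_i^j$ by adding the edges $x_{(i-1)k}x_{(i+j)k}$, $1\le k\le 4$ (indices modulo $n$); thus $G_i^4\cong G_{n-4,4}$. A set $D$ is a total dominating set of a graph $G$ if every vertex of $G$ has a neighbour (in $G$) in $D$. *)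

(* Defs.v *)
From mathcomp Require Import all_boot.
Set Implicit Arguments. Unset Strict Implicit. Unset Printing Implicit Defensive.

(* Indices are 0-based: row index i : 'I_n stands for the paper's i+1,
   column index k : 'I_m for the paper's k+1. *)

Definition cadj (n : nat) (i j : 'I_n) : bool :=
  (j == i.+1 %% n :> nat) || (i == j.+1 %% n :> nat).

Definition gadj (n m : nat) (u v : 'I_n * 'I_m) : bool :=
  ((u.1 == v.1) && cadj u.2 v.2) || ((u.2 == v.2) && cadj u.1 v.1).

(* H_i^j = Y_i u Y_{i+1} u ... u Y_{i+j-1}, first indices mod n *)
Definition Hset (m n : nat) (i : 'I_n) (j : nat) : {set 'I_n * 'I_m} :=
  [set u : 'I_n * 'I_m | (u.1 + n - i) %% n < j].

(* G_i^4: vertex set ~: H_i^4, edges of G_{n,4} between remaining vertices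
   plus the edges x_{(i-1)k} x_{(i+4)k} *)
Definition Gi4adj (n : nat) (i : 'I_n) (u v : 'I_n * 'I_4) : bool :=
  [&& u \notin Hset 4 i 4, v \notin Hset 4 i 4 &
     gadj u v ||
     ((u.2 == v.2) &&
      (((u.1 == (i + n - 1) %% n :> nat) && (v.1 == (i + 4) %% n :> nat)) ||
       ((v.1 == (i + n - 1) %% n :> nat) && (u.1 == (i + 4) %% n :> nat))))].

Definition total_dom (T : finType) (V : {set T}) (e : rel T) (D : {set T}) : Prop :=
  D \subset V /\ (forall v, v \in V -> exists2 u, u \in D & e v u).

(* Main.v *)
Require Import Defs.
From mathcomp Require Import all_boot zify.
Set Implicit Arguments. Unset Strict Implicit. Unset Printing Implicit Defensive.

Lemma npos {n} (i : 'I_n) : 0 < n.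
Proof. exact: (leq_ltn_trans (leq0n i) (ltn_ord i)). Qed.

Definition R n (i : 'I_n) (j : nat) : 'I_n :=
  Ordinal (ltn_pmod (i + n.-1 + j) (npos i)).

Lemma R_val n (i : 'I_n) j : val (R i j) = (i + n.-1 + j) %% n.
Proof. by []. Qed.

Lemma RS n (i : 'I_n) j : ordS (R i j) = R i j.+1.
Proof.
apply/val_inj; rewrite /= -addn1 modnDml addn1 addnS. done.
Qed.

Lemma RP n (i : 'I_n) j : ord_pred (R i j.+1) = R i j.
Proof. by rewrite -RS ordSK. Qed.

Lemma R_inj n (i : 'I_n) j k : j < n -> k < n -> R i j = R i k -> j = k.
Proof.
move=> Hj Hk /(congr1 val); rewrite !R_val => /eqP.
rewrite eqn_modDl !modn_small // => /eqP //.
Qed.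

Lemma R_H n (i : 'I_n) j (c : 'I_4) : 7 <= n -> j <= n ->
  ((R i j, c) \in Hset 4 i 4) = (0 < j <= 4).
Proof.
move=> Hn Hj; have n0 := npos i; have Hi := ltn_ord i.
rewrite inE /= -addnBA; last exact: ltnW.
rewrite modnDml.
have -> : i + n.-1 + j + (n - i) = n + (n.-1 + j) by lia.
rewrite modnDl.
case: j Hj => [|j] Hj.
  rewrite addn0 modn_small; last by lia. lia.
have -> : n.-1 + j.+1 = n + j by lia.
rewrite modnDl modn_small; last by lia. lia.
Qed.

Lemma H_dec n (i : 'I_n) (u : 'I_n) : exists2 j, 0 < j <= n & u = R i j.
Proof.
have n0 := npos i; have Hi := ltn_ord i; have Hu := ltn_ord u.
exists ((u + n - i) %% n).+1.
  by rewrite /= ltn_pmod.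
apply/val_inj; rewrite R_val.
have -> : i + n.-1 + ((u + n - i) %% n).+1 = n + (i + (u + n - i) %% n) by lia.
rewrite modnDl modnDmr.
have -> : i + (u + n - i) = u + n by lia.
by rewrite modnDr modn_small.
Qed.

Lemma cadjE n (a b : 'I_n) : cadj a b = (b == ordS a) || (b == ord_pred a).
Proof.
rewrite /cadj; congr (_ || _).
have -> : (val a == (val b).+1 %% n) = (a == ordS b) by [].
by apply/eqP/eqP => [->|->]; [rewrite ordSK | rewrite ord_predK].
Qed.

Lemma gadjE n (v u : 'I_n * 'I_4) : gadj v u =
  [|| u == (v.1, ordS v.2), u == (v.1, ord_pred v.2),
      u == (ordS v.1, v.2) | u == (ord_pred v.1, v.2)].
Proof.
case: v u => [v1 v2] [u1 u2]; rewrite /gadj !cadjE /= !xpair_eqE.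
rewrite [v1 == u1]eq_sym [v2 == u2]eq_sym.
by case: (u1 == v1); case: (u2 == v2); case: (u2 == ordS v2);
  case: (u2 == ord_pred v2); case: (u1 == ordS v1); case: (u1 == ord_pred v1).
Qed.

Lemma gadj_sym n (v u : 'I_n * 'I_4) : gadj v u = gadj u v.
Proof.
rewrite /gadj /cadj [u.1 == v.1]eq_sym [u.2 == v.2]eq_sym.
by rewrite [(_ == _.+1 %% _) || _]orbC [(val v.1 == _) || _]orbC.
Qed.

Arguments R : simpl never.

Lemma colne (c : 'I_4) : (ordS c == ord_pred c) = false.
Proof. by case: c => [[|[|[|[|k]]]] Hk]. Qed.

Lemma R_neq n (i : 'I_n) j k : j < n -> k < n -> j != k -> (R i j == R i k) = false.
Proof. move=> Hj Hk Hjk; apply/negbTE/eqP => /R_inj E. by rewrite E ?eqxx in Hjk. Qed.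

Lemma card_filt (T : finType) (s : seq T) (P : pred T) :
  uniq s -> #|[set u in s | P u]| = count P s.
Proof.
move=> U; rewrite -size_filter -(card_uniqP (filter_uniq P U)).
by apply: eq_card => x; rewrite inE mem_filter andbC.
Qed.

Lemma cnt_eq n (Hn : 7 <= n) (i : 'I_n) (D : {set 'I_n * 'I_4}) j c : j < 4 ->
  #|[set u in D | gadj (R i j.+1, c) u]| =
  ((R i j.+1, ordS c) \in D) + ((R i j.+1, ord_pred c) \in D)
  + ((R i j.+2, c) \in D) + ((R i j, c) \in D).
Proof.
move=> Hj.
set s := [:: (R i j.+1, ordS c); (R i j.+1, ord_pred c); (R i j.+2, c); (R i j, c)].
have Hs : uniq s.
  rewrite /s /= !inE !xpair_eqE colne eqxx.
  rewrite (@R_neq _ i j.+1 j.+2) ?(@R_neq _ i j.+1 j) ?(@R_neq _ i j.+2 j) //;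
    try lia.
  idtac.
have -> : [set u in D | gadj (R i j.+1, c) u] = [set u in s | u \in D].
  by apply/setP => u; rewrite !inE gadjE /= RS RP andbC.
rewrite card_filt //= addn0 !addnA //.
Qed.

Lemma nb_or n (i : 'I_n) (D : {set 'I_n * 'I_4}) j c u :
  u \in D -> gadj (R i j.+1, c) u ->
  [|| (R i j.+1, ordS c) \in D, (R i j.+1, ord_pred c) \in D,
      (R i j.+2, c) \in D | (R i j, c) \in D].
Proof.
move=> Du; rewrite gadjE /= RS RP.
by case/or4P => /eqP E; rewrite -E Du ?orbT.
Qed.

Lemma col_cases (c : 'I_4) :
  c = inord 0 \/ c = inord 1 \/ c = inord 2 \/ c = inord 3.
Proof.
case: c => [[|[|[|[|k]]]] Hk] //;
  [left|right;left|right;right;left|right;right;right];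
  by apply/val_inj; rewrite /= inordK.
Qed.

Lemma b1 (b : bool) : (b : nat) = 1 -> b.
Proof. by case: b. Qed.

Lemma R0v n (i : 'I_n) : ((R i 0 : nat) == (i + n - 1) %% n) = true.
Proof. have := npos i; rewrite R_val => H; apply/eqP; congr (_ %% _); lia. Qed.

Lemma R5v n (i : 'I_n) : ((R i 5 : nat) == (i + 4) %% n) = true.
Proof.
have := npos i; rewrite R_val => H; apply/eqP.
have -> : i + n.-1 + 5 = (i + 4) + n by lia.
by rewrite modnDr.
Qed.

Fixpoint allb (k : nat) (P : seq bool -> bool) : bool :=
  if k is k'.+1 then allb k' (fun s => P (true :: s)) && allb k' (fun s => P (false :: s))
  else P [::].

Lemma allbP k P : allb k P -> forall s, size s = k -> P s.
Proof.
elim: k P => [|k IH] P /=; first by move=> H [|].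
move=> /andP[H1 H2] [|b s] //= [Hs].
by case: b; [exact: (IH _ H1 _ Hs) | exact: (IH _ H2 _ Hs)].
Qed.

Lemma HinR n (Hn : 7 <= n) (i : 'I_n) j (c : 'I_4) : 0 < j <= 4 -> (R i j, c) \in Hset 4 i 4.
Proof. move=> H; rewrite R_H //; lia. Qed.

Lemma leq1a a b : a + b = 1 -> a <= 1.
Proof. lia. Qed.
Lemma leq1b a b c d : a + b + c + d = 1 -> a + b + d <= 1.
Proof. lia. Qed.
Lemma fin1 a b : a + b = 1 -> a = 0 -> b = 1.
Proof. lia. Qed.
Lemma fin2 a b c d : a + b + c + d = 1 -> a + b + d = 0 -> c = 1.
Proof. lia. Qed.

Lemma outH n (Hn : 7 <= n) (i : 'I_n) j (c : 'I_4) : j <= n ->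
  (R i j, c) \notin Hset 4 i 4 -> (j == 0) || (4 < j).
Proof. move=> Hj; rewrite R_H //; case: j Hj => // j Hj /=; rewrite -ltnNge //. Qed.

Definition Q1 (s : seq bool) : bool := [&& [|| nth false s 5, nth false s 7, nth false s 8 | nth false s 0], [|| nth false s 6, nth false s 4, nth false s 9 | nth false s 1], [|| nth false s 7, nth false s 5, nth false s 10 | nth false s 2], [|| nth false s 4, nth false s 6, nth false s 11 | nth false s 3], [|| nth false s 9, nth false s 11, nth false s 12 | nth false s 4], [|| nth false s 10, nth false s 8, nth false s 13 | nth false s 5], [|| nth false s 11, nth false s 9, nth false s 14 | nth false s 6] & [|| nth false s 8, nth false s 10, nth false s 15 | nth false s 7]] ==> (4 <= nth false s 0 + nth false s 1 + nth false s 2 + nth false s 3 + nth false s 4 + nth false s 5 + nth false s 6 + nth false s 7 + nth false s 8 + nth false s 9 + nth false s 10 + nth false s 11 + nth false s 12 + nth false s 13 + nth false s 14 + nth false s 15).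
Lemma Q1_ok : forall s, size s = 16 -> Q1 s. Proof. apply: allbP. by vm_compute. Qed.
Lemma spec1 (x10 x11 x12 x13 x20 x21 x22 x23 x30 x31 x32 x33 x40 x41 x42 x43 : bool) : [|| x21, x23, x30 | x10] -> [|| x22, x20, x31 | x11] -> [|| x23, x21, x32 | x12] -> [|| x20, x22, x33 | x13] -> [|| x31, x33, x40 | x20] -> [|| x32, x30, x41 | x21] -> [|| x33, x31, x42 | x22] -> [|| x30, x32, x43 | x23] -> 4 <= x10 + x11 + x12 + x13 + x20 + x21 + x22 + x23 + x30 + x31 + x32 + x33 + x40 + x41 + x42 + x43.
Proof. move=> H0 H1 H2 H3 H4 H5 H6 H7. have := @Q1_ok [:: x10; x11; x12; x13; x20; x21; x22; x23; x30; x31; x32; x33; x40; x41; x42; x43] erefl. by rewrite /Q1 /= H0 H1 H2 H3 H4 H5 H6 H7. Qed.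
Definition QA0 (s : seq bool) : bool := [&& (nth false s 5 + nth false s 7 + nth false s 8 + nth false s 0 == 1), (nth false s 6 + nth false s 4 + nth false s 9 + nth false s 1 == 1), (nth false s 7 + nth false s 5 + nth false s 10 + nth false s 2 == 1), (nth false s 4 + nth false s 6 + nth false s 11 + nth false s 3 == 1), (nth false s 9 + nth false s 11 + nth false s 12 + nth false s 4 == 1), (nth false s 10 + nth false s 8 + nth false s 13 + nth false s 5 == 1), (nth false s 11 + nth false s 9 + nth false s 14 + nth false s 6 == 1), (nth false s 8 + nth false s 10 + nth false s 15 + nth false s 7 == 1), (nth false s 1 + nth false s 3 + nth false s 4 <= 1), (nth false s 2 + nth false s 0 + nth false s 5 <= 1), (nth false s 3 + nth false s 1 + nth false s 6 <= 1), (nth false s 0 + nth false s 2 + nth false s 7 <= 1), (nth false s 13 + nth false s 15 + nth false s 8 <= 1), (nth false s 14 + nth false s 12 + nth false s 9 <= 1), (nth false s 15 + nth false s 13 + nth false s 10 <= 1) & (nth false s 12 + nth false s 14 + nth false s 11 <= 1)] ==> (nth false s 0 ==> (nth false s 13 + nth false s 15 + nth false s 8 == 0)).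
Lemma QA0_ok : forall s, size s = 16 -> QA0 s. Proof. apply: allbP. by vm_compute. Qed.
Lemma specA0 (x10 x11 x12 x13 x20 x21 x22 x23 x30 x31 x32 x33 x40 x41 x42 x43 : bool) : x21 + x23 + x30 + x10 = 1 -> x22 + x20 + x31 + x11 = 1 -> x23 + x21 + x32 + x12 = 1 -> x20 + x22 + x33 + x13 = 1 -> x31 + x33 + x40 + x20 = 1 -> x32 + x30 + x41 + x21 = 1 -> x33 + x31 + x42 + x22 = 1 -> x30 + x32 + x43 + x23 = 1 -> x11 + x13 + x20 <= 1 -> x12 + x10 + x21 <= 1 -> x13 + x11 + x22 <= 1 -> x10 + x12 + x23 <= 1 -> x41 + x43 + x30 <= 1 -> x42 + x40 + x31 <= 1 -> x43 + x41 + x32 <= 1 -> x40 + x42 + x33 <= 1 -> x10 -> x41 + x43 + x30 = 0.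
Proof. move=> H0 H1 H2 H3 H4 H5 H6 H7 H8 H9 H10 H11 H12 H13 H14 H15 Hx. have := @QA0_ok [:: x10; x11; x12; x13; x20; x21; x22; x23; x30; x31; x32; x33; x40; x41; x42; x43] erefl. rewrite /QA0 /= H0 H1 H2 H3 H4 H5 H6 H7 H8 H9 H10 H11 H12 H13 H14 H15 /= Hx /=. by move/eqP. Qed.
Definition QB0 (s : seq bool) : bool := [&& (nth false s 5 + nth false s 7 + nth false s 8 + nth false s 0 == 1), (nth false s 6 + nth false s 4 + nth false s 9 + nth false s 1 == 1), (nth false s 7 + nth false s 5 + nth false s 10 + nth false s 2 == 1), (nth false s 4 + nth false s 6 + nth false s 11 + nth false s 3 == 1), (nth false s 9 + nth false s 11 + nth false s 12 + nth false s 4 == 1), (nth false s 10 + nth false s 8 + nth false s 13 + nth false s 5 == 1), (nth false s 11 + nth false s 9 + nth false s 14 + nth false s 6 == 1), (nth false s 8 + nth false s 10 + nth false s 15 + nth false s 7 == 1), (nth false s 1 + nth false s 3 + nth false s 4 <= 1), (nth false s 2 + nth false s 0 + nth false s 5 <= 1), (nth false s 3 + nth false s 1 + nth false s 6 <= 1), (nth false s 0 + nth false s 2 + nth false s 7 <= 1), (nth false s 13 + nth false s 15 + nth false s 8 <= 1), (nth false s 14 + nth false s 12 + nth false s 9 <= 1), (nth false s 15 + nth false s 13 + nth false s 10 <= 1) & (nth false s 12 + nth false s 14 + nth false s 11 <= 1)] ==> (nth false s 12 ==> (nth false s 1 + nth false s 3 + nth false s 4 == 0)).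
Lemma QB0_ok : forall s, size s = 16 -> QB0 s. Proof. apply: allbP. by vm_compute. Qed.
Lemma specB0 (x10 x11 x12 x13 x20 x21 x22 x23 x30 x31 x32 x33 x40 x41 x42 x43 : bool) : x21 + x23 + x30 + x10 = 1 -> x22 + x20 + x31 + x11 = 1 -> x23 + x21 + x32 + x12 = 1 -> x20 + x22 + x33 + x13 = 1 -> x31 + x33 + x40 + x20 = 1 -> x32 + x30 + x41 + x21 = 1 -> x33 + x31 + x42 + x22 = 1 -> x30 + x32 + x43 + x23 = 1 -> x11 + x13 + x20 <= 1 -> x12 + x10 + x21 <= 1 -> x13 + x11 + x22 <= 1 -> x10 + x12 + x23 <= 1 -> x41 + x43 + x30 <= 1 -> x42 + x40 + x31 <= 1 -> x43 + x41 + x32 <= 1 -> x40 + x42 + x33 <= 1 -> x40 -> x11 + x13 + x20 = 0.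
Proof. move=> H0 H1 H2 H3 H4 H5 H6 H7 H8 H9 H10 H11 H12 H13 H14 H15 Hx. have := @QB0_ok [:: x10; x11; x12; x13; x20; x21; x22; x23; x30; x31; x32; x33; x40; x41; x42; x43] erefl. rewrite /QB0 /= H0 H1 H2 H3 H4 H5 H6 H7 H8 H9 H10 H11 H12 H13 H14 H15 /= Hx /=. by move/eqP. Qed.
Definition QA1 (s : seq bool) : bool := [&& (nth false s 5 + nth false s 7 + nth false s 8 + nth false s 0 == 1), (nth false s 6 + nth false s 4 + nth false s 9 + nth false s 1 == 1), (nth false s 7 + nth false s 5 + nth false s 10 + nth false s 2 == 1), (nth false s 4 + nth false s 6 + nth false s 11 + nth false s 3 == 1), (nth false s 9 + nth false s 11 + nth false s 12 + nth false s 4 == 1), (nth false s 10 + nth false s 8 + nth false s 13 + nth false s 5 == 1), (nth false s 11 + nth false s 9 + nth false s 14 + nth false s 6 == 1), (nth false s 8 + nth false s 10 + nth false s 15 + nth false s 7 == 1), (nth false s 1 + nth false s 3 + nth false s 4 <= 1), (nth false s 2 + nth false s 0 + nth false s 5 <= 1), (nth false s 3 + nth false s 1 + nth false s 6 <= 1), (nth false s 0 + nth false s 2 + nth false s 7 <= 1), (nth false s 13 + nth false s 15 + nth false s 8 <= 1), (nth false s 14 + nth false s 12 + nth false s 9 <= 1), (nth false s 15 + nth false s 13 + nth false s 10 <= 1) & (nth false s 12 + nth false s 14 + nth false s 11 <= 1)] ==> (nth false s 1 ==> (nth false s 14 + nth false s 12 + nth false s 9 == 0)).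
Lemma QA1_ok : forall s, size s = 16 -> QA1 s. Proof. apply: allbP. by vm_compute. Qed.
Lemma specA1 (x10 x11 x12 x13 x20 x21 x22 x23 x30 x31 x32 x33 x40 x41 x42 x43 : bool) : x21 + x23 + x30 + x10 = 1 -> x22 + x20 + x31 + x11 = 1 -> x23 + x21 + x32 + x12 = 1 -> x20 + x22 + x33 + x13 = 1 -> x31 + x33 + x40 + x20 = 1 -> x32 + x30 + x41 + x21 = 1 -> x33 + x31 + x42 + x22 = 1 -> x30 + x32 + x43 + x23 = 1 -> x11 + x13 + x20 <= 1 -> x12 + x10 + x21 <= 1 -> x13 + x11 + x22 <= 1 -> x10 + x12 + x23 <= 1 -> x41 + x43 + x30 <= 1 -> x42 + x40 + x31 <= 1 -> x43 + x41 + x32 <= 1 -> x40 + x42 + x33 <= 1 -> x11 -> x42 + x40 + x31 = 0.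
Proof. move=> H0 H1 H2 H3 H4 H5 H6 H7 H8 H9 H10 H11 H12 H13 H14 H15 Hx. have := @QA1_ok [:: x10; x11; x12; x13; x20; x21; x22; x23; x30; x31; x32; x33; x40; x41; x42; x43] erefl. rewrite /QA1 /= H0 H1 H2 H3 H4 H5 H6 H7 H8 H9 H10 H11 H12 H13 H14 H15 /= Hx /=. by move/eqP. Qed.
Definition QB1 (s : seq bool) : bool := [&& (nth false s 5 + nth false s 7 + nth false s 8 + nth false s 0 == 1), (nth false s 6 + nth false s 4 + nth false s 9 + nth false s 1 == 1), (nth false s 7 + nth false s 5 + nth false s 10 + nth false s 2 == 1), (nth false s 4 + nth false s 6 + nth false s 11 + nth false s 3 == 1), (nth false s 9 + nth false s 11 + nth false s 12 + nth false s 4 == 1), (nth false s 10 + nth false s 8 + nth false s 13 + nth false s 5 == 1), (nth false s 11 + nth false s 9 + nth false s 14 + nth false s 6 == 1), (nth false s 8 + nth false s 10 + nth false s 15 + nth false s 7 == 1), (nth false s 1 + nth false s 3 + nth false s 4 <= 1), (nth false s 2 + nth false s 0 + nth false s 5 <= 1), (nth false s 3 + nth false s 1 + nth false s 6 <= 1), (nth false s 0 + nth false s 2 + nth false s 7 <= 1), (nth false s 13 + nth false s 15 + nth false s 8 <= 1), (nth false s 14 + nth false s 12 + nth false s 9 <= 1), (nth false s 15 + nth false s 13 + nth false s 10 <= 1) & (nth false s 12 + nth false s 14 + nth false s 11 <= 1)] ==> (nth false s 13 ==> (nth false s 2 + nth false s 0 + nth false s 5 == 0)).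
Lemma QB1_ok : forall s, size s = 16 -> QB1 s. Proof. apply: allbP. by vm_compute. Qed.
Lemma specB1 (x10 x11 x12 x13 x20 x21 x22 x23 x30 x31 x32 x33 x40 x41 x42 x43 : bool) : x21 + x23 + x30 + x10 = 1 -> x22 + x20 + x31 + x11 = 1 -> x23 + x21 + x32 + x12 = 1 -> x20 + x22 + x33 + x13 = 1 -> x31 + x33 + x40 + x20 = 1 -> x32 + x30 + x41 + x21 = 1 -> x33 + x31 + x42 + x22 = 1 -> x30 + x32 + x43 + x23 = 1 -> x11 + x13 + x20 <= 1 -> x12 + x10 + x21 <= 1 -> x13 + x11 + x22 <= 1 -> x10 + x12 + x23 <= 1 -> x41 + x43 + x30 <= 1 -> x42 + x40 + x31 <= 1 -> x43 + x41 + x32 <= 1 -> x40 + x42 + x33 <= 1 -> x41 -> x12 + x10 + x21 = 0.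
Proof. move=> H0 H1 H2 H3 H4 H5 H6 H7 H8 H9 H10 H11 H12 H13 H14 H15 Hx. have := @QB1_ok [:: x10; x11; x12; x13; x20; x21; x22; x23; x30; x31; x32; x33; x40; x41; x42; x43] erefl. rewrite /QB1 /= H0 H1 H2 H3 H4 H5 H6 H7 H8 H9 H10 H11 H12 H13 H14 H15 /= Hx /=. by move/eqP. Qed.
Definition QA2 (s : seq bool) : bool := [&& (nth false s 5 + nth false s 7 + nth false s 8 + nth false s 0 == 1), (nth false s 6 + nth false s 4 + nth false s 9 + nth false s 1 == 1), (nth false s 7 + nth false s 5 + nth false s 10 + nth false s 2 == 1), (nth false s 4 + nth false s 6 + nth false s 11 + nth false s 3 == 1), (nth false s 9 + nth false s 11 + nth false s 12 + nth false s 4 == 1), (nth false s 10 + nth false s 8 + nth false s 13 + nth false s 5 == 1), (nth false s 11 + nth false s 9 + nth false s 14 + nth false s 6 == 1), (nth false s 8 + nth false s 10 + nth false s 15 + nth false s 7 == 1), (nth false s 1 + nth false s 3 + nth false s 4 <= 1), (nth false s 2 + nth false s 0 + nth false s 5 <= 1), (nth false s 3 + nth false s 1 + nth false s 6 <= 1), (nth false s 0 + nth false s 2 + nth false s 7 <= 1), (nth false s 13 + nth false s 15 + nth false s 8 <= 1), (nth false s 14 + nth false s 12 + nth false s 9 <= 1), (nth false s 15 + nth false s 13 + nth false s 10 <= 1) & (nth false s 12 + nth false s 14 + nth false s 11 <= 1)] ==> (nth false s 2 ==> (nth false s 15 + nth false s 13 + nth false s 10 == 0)).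
Lemma QA2_ok : forall s, size s = 16 -> QA2 s. Proof. apply: allbP. by vm_compute. Qed.
Lemma specA2 (x10 x11 x12 x13 x20 x21 x22 x23 x30 x31 x32 x33 x40 x41 x42 x43 : bool) : x21 + x23 + x30 + x10 = 1 -> x22 + x20 + x31 + x11 = 1 -> x23 + x21 + x32 + x12 = 1 -> x20 + x22 + x33 + x13 = 1 -> x31 + x33 + x40 + x20 = 1 -> x32 + x30 + x41 + x21 = 1 -> x33 + x31 + x42 + x22 = 1 -> x30 + x32 + x43 + x23 = 1 -> x11 + x13 + x20 <= 1 -> x12 + x10 + x21 <= 1 -> x13 + x11 + x22 <= 1 -> x10 + x12 + x23 <= 1 -> x41 + x43 + x30 <= 1 -> x42 + x40 + x31 <= 1 -> x43 + x41 + x32 <= 1 -> x40 + x42 + x33 <= 1 -> x12 -> x43 + x41 + x32 = 0.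
Proof. move=> H0 H1 H2 H3 H4 H5 H6 H7 H8 H9 H10 H11 H12 H13 H14 H15 Hx. have := @QA2_ok [:: x10; x11; x12; x13; x20; x21; x22; x23; x30; x31; x32; x33; x40; x41; x42; x43] erefl. rewrite /QA2 /= H0 H1 H2 H3 H4 H5 H6 H7 H8 H9 H10 H11 H12 H13 H14 H15 /= Hx /=. by move/eqP. Qed.
Definition QB2 (s : seq bool) : bool := [&& (nth false s 5 + nth false s 7 + nth false s 8 + nth false s 0 == 1), (nth false s 6 + nth false s 4 + nth false s 9 + nth false s 1 == 1), (nth false s 7 + nth false s 5 + nth false s 10 + nth false s 2 == 1), (nth false s 4 + nth false s 6 + nth false s 11 + nth false s 3 == 1), (nth false s 9 + nth false s 11 + nth false s 12 + nth false s 4 == 1), (nth false s 10 + nth false s 8 + nth false s 13 + nth false s 5 == 1), (nth false s 11 + nth false s 9 + nth false s 14 + nth false s 6 == 1), (nth false s 8 + nth false s 10 + nth false s 15 + nth false s 7 == 1), (nth false s 1 + nth false s 3 + nth false s 4 <= 1), (nth false s 2 + nth false s 0 + nth false s 5 <= 1), (nth false s 3 + nth false s 1 + nth false s 6 <= 1), (nth false s 0 + nth false s 2 + nth false s 7 <= 1), (nth false s 13 + nth false s 15 + nth false s 8 <= 1), (nth false s 14 + nth false s 12 + nth false s 9 <= 1), (nth false s 15 + nth false s 13 + nth false s 10 <= 1) & (nth false s 12 + nth false s 14 + nth false s 11 <= 1)] ==> (nth false s 14 ==> (nth false s 3 + nth false s 1 + nth false s 6 == 0)).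
Lemma QB2_ok : forall s, size s = 16 -> QB2 s. Proof. apply: allbP. by vm_compute. Qed.
Lemma specB2 (x10 x11 x12 x13 x20 x21 x22 x23 x30 x31 x32 x33 x40 x41 x42 x43 : bool) : x21 + x23 + x30 + x10 = 1 -> x22 + x20 + x31 + x11 = 1 -> x23 + x21 + x32 + x12 = 1 -> x20 + x22 + x33 + x13 = 1 -> x31 + x33 + x40 + x20 = 1 -> x32 + x30 + x41 + x21 = 1 -> x33 + x31 + x42 + x22 = 1 -> x30 + x32 + x43 + x23 = 1 -> x11 + x13 + x20 <= 1 -> x12 + x10 + x21 <= 1 -> x13 + x11 + x22 <= 1 -> x10 + x12 + x23 <= 1 -> x41 + x43 + x30 <= 1 -> x42 + x40 + x31 <= 1 -> x43 + x41 + x32 <= 1 -> x40 + x42 + x33 <= 1 -> x42 -> x13 + x11 + x22 = 0.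
Proof. move=> H0 H1 H2 H3 H4 H5 H6 H7 H8 H9 H10 H11 H12 H13 H14 H15 Hx. have := @QB2_ok [:: x10; x11; x12; x13; x20; x21; x22; x23; x30; x31; x32; x33; x40; x41; x42; x43] erefl. rewrite /QB2 /= H0 H1 H2 H3 H4 H5 H6 H7 H8 H9 H10 H11 H12 H13 H14 H15 /= Hx /=. by move/eqP. Qed.
Definition QA3 (s : seq bool) : bool := [&& (nth false s 5 + nth false s 7 + nth false s 8 + nth false s 0 == 1), (nth false s 6 + nth false s 4 + nth false s 9 + nth false s 1 == 1), (nth false s 7 + nth false s 5 + nth false s 10 + nth false s 2 == 1), (nth false s 4 + nth false s 6 + nth false s 11 + nth false s 3 == 1), (nth false s 9 + nth false s 11 + nth false s 12 + nth false s 4 == 1), (nth false s 10 + nth false s 8 + nth false s 13 + nth false s 5 == 1), (nth false s 11 + nth false s 9 + nth false s 14 + nth false s 6 == 1), (nth false s 8 + nth false s 10 + nth false s 15 + nth false s 7 == 1), (nth false s 1 + nth false s 3 + nth false s 4 <= 1), (nth false s 2 + nth false s 0 + nth false s 5 <= 1), (nth false s 3 + nth false s 1 + nth false s 6 <= 1), (nth false s 0 + nth false s 2 + nth false s 7 <= 1), (nth false s 13 + nth false s 15 + nth false s 8 <= 1), (nth false s 14 + nth false s 12 + nth false s 9 <= 1), (nth false s 15 + nth false s 13 + nth false s 10 <= 1) & (nth false s 12 + nth false s 14 + nth false s 11 <= 1)] ==> (nth false s 3 ==> (nth false s 12 + nth false s 14 + nth false s 11 == 0)).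
Lemma QA3_ok : forall s, size s = 16 -> QA3 s. Proof. apply: allbP. by vm_compute. Qed.
Lemma specA3 (x10 x11 x12 x13 x20 x21 x22 x23 x30 x31 x32 x33 x40 x41 x42 x43 : bool) : x21 + x23 + x30 + x10 = 1 -> x22 + x20 + x31 + x11 = 1 -> x23 + x21 + x32 + x12 = 1 -> x20 + x22 + x33 + x13 = 1 -> x31 + x33 + x40 + x20 = 1 -> x32 + x30 + x41 + x21 = 1 -> x33 + x31 + x42 + x22 = 1 -> x30 + x32 + x43 + x23 = 1 -> x11 + x13 + x20 <= 1 -> x12 + x10 + x21 <= 1 -> x13 + x11 + x22 <= 1 -> x10 + x12 + x23 <= 1 -> x41 + x43 + x30 <= 1 -> x42 + x40 + x31 <= 1 -> x43 + x41 + x32 <= 1 -> x40 + x42 + x33 <= 1 -> x13 -> x40 + x42 + x33 = 0.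
Proof. move=> H0 H1 H2 H3 H4 H5 H6 H7 H8 H9 H10 H11 H12 H13 H14 H15 Hx. have := @QA3_ok [:: x10; x11; x12; x13; x20; x21; x22; x23; x30; x31; x32; x33; x40; x41; x42; x43] erefl. rewrite /QA3 /= H0 H1 H2 H3 H4 H5 H6 H7 H8 H9 H10 H11 H12 H13 H14 H15 /= Hx /=. by move/eqP. Qed.
Definition QB3 (s : seq bool) : bool := [&& (nth false s 5 + nth false s 7 + nth false s 8 + nth false s 0 == 1), (nth false s 6 + nth false s 4 + nth false s 9 + nth false s 1 == 1), (nth false s 7 + nth false s 5 + nth false s 10 + nth false s 2 == 1), (nth false s 4 + nth false s 6 + nth false s 11 + nth false s 3 == 1), (nth false s 9 + nth false s 11 + nth false s 12 + nth false s 4 == 1), (nth false s 10 + nth false s 8 + nth false s 13 + nth false s 5 == 1), (nth false s 11 + nth false s 9 + nth false s 14 + nth false s 6 == 1), (nth false s 8 + nth false s 10 + nth false s 15 + nth false s 7 == 1), (nth false s 1 + nth false s 3 + nth false s 4 <= 1), (nth false s 2 + nth false s 0 + nth false s 5 <= 1), (nth false s 3 + nth false s 1 + nth false s 6 <= 1), (nth false s 0 + nth false s 2 + nth false s 7 <= 1), (nth false s 13 + nth false s 15 + nth false s 8 <= 1), (nth false s 14 + nth false s 12 + nth false s 9 <= 1), (nth false s 15 + nth false s 13 + nth false s 10 <= 1) & (nth false s 12 + nth false s 14 + nth false s 11 <= 1)] ==> (nth false s 15 ==> (nth false s 0 + nth false s 2 + nth false s 7 == 0)).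
Lemma QB3_ok : forall s, size s = 16 -> QB3 s. Proof. apply: allbP. by vm_compute. Qed.
Lemma specB3 (x10 x11 x12 x13 x20 x21 x22 x23 x30 x31 x32 x33 x40 x41 x42 x43 : bool) : x21 + x23 + x30 + x10 = 1 -> x22 + x20 + x31 + x11 = 1 -> x23 + x21 + x32 + x12 = 1 -> x20 + x22 + x33 + x13 = 1 -> x31 + x33 + x40 + x20 = 1 -> x32 + x30 + x41 + x21 = 1 -> x33 + x31 + x42 + x22 = 1 -> x30 + x32 + x43 + x23 = 1 -> x11 + x13 + x20 <= 1 -> x12 + x10 + x21 <= 1 -> x13 + x11 + x22 <= 1 -> x10 + x12 + x23 <= 1 -> x41 + x43 + x30 <= 1 -> x42 + x40 + x31 <= 1 -> x43 + x41 + x32 <= 1 -> x40 + x42 + x33 <= 1 -> x43 -> x10 + x12 + x23 = 0.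
Proof. move=> H0 H1 H2 H3 H4 H5 H6 H7 H8 H9 H10 H11 H12 H13 H14 H15 Hx. have := @QB3_ok [:: x10; x11; x12; x13; x20; x21; x22; x23; x30; x31; x32; x33; x40; x41; x42; x43] erefl. rewrite /QB3 /= H0 H1 H2 H3 H4 H5 H6 H7 H8 H9 H10 H11 H12 H13 H14 H15 /= Hx /=. by move/eqP. Qed.
Lemma oS0 : ordS (inord 0 : 'I_4) = inord 1. Proof. by apply/val_inj; rewrite /= !inordK. Qed.
Lemma oP0 : ord_pred (inord 0 : 'I_4) = inord 3. Proof. by apply/val_inj; rewrite /= !inordK. Qed.
Lemma oS1 : ordS (inord 1 : 'I_4) = inord 2. Proof. by apply/val_inj; rewrite /= !inordK. Qed.
Lemma oP1 : ord_pred (inord 1 : 'I_4) = inord 0. Proof. by apply/val_inj; rewrite /= !inordK. Qed.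
Lemma oS2 : ordS (inord 2 : 'I_4) = inord 3. Proof. by apply/val_inj; rewrite /= !inordK. Qed.
Lemma oP2 : ord_pred (inord 2 : 'I_4) = inord 1. Proof. by apply/val_inj; rewrite /= !inordK. Qed.
Lemma oS3 : ordS (inord 3 : 'I_4) = inord 0. Proof. by apply/val_inj; rewrite /= !inordK. Qed.
Lemma oP3 : ord_pred (inord 3 : 'I_4) = inord 2. Proof. by apply/val_inj; rewrite /= !inordK. Qed.
Definition idx : seq (nat * nat) := [:: (1,0); (1,1); (1,2); (1,3); (2,0); (2,1); (2,2); (2,3); (3,0); (3,1); (3,2); (3,3); (4,0); (4,1); (4,2); (4,3)].
Lemma low n (Hn : 7 <= n) (i : 'I_n) (D : {set 'I_n * 'I_4}) : ((R i 1, (inord 0 : 'I_4)) \in D) + ((R i 1, (inord 1 : 'I_4)) \in D) + ((R i 1, (inord 2 : 'I_4)) \in D) + ((R i 1, (inord 3 : 'I_4)) \in D) + ((R i 2, (inord 0 : 'I_4)) \in D) + ((R i 2, (inord 1 : 'I_4)) \in D) + ((R i 2, (inord 2 : 'I_4)) \in D) + ((R i 2, (inord 3 : 'I_4)) \in D) + ((R i 3, (inord 0 : 'I_4)) \in D) + ((R i 3, (inord 1 : 'I_4)) \in D) + ((R i 3, (inord 2 : 'I_4)) \in D) + ((R i 3, (inord 3 : 'I_4)) \in D) + ((R i 4, (inord 0 : 'I_4)) \in D) + ((R i 4, (inord 1 : 'I_4)) \in D) + ((R i 4, (inord 2 : 'I_4)) \in D) + ((R i 4, (inord 3 : 'I_4))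 \in D) <= #|D :&: Hset 4 i 4|.
Proof.
pose F := fun p : nat * nat => (R i p.1, (inord p.2 : 'I_4)).
have Hb : all (fun p => (0 < p.1 <= 4) && (p.2 < 4)) idx by [].
have U : uniq (map F idx).
  rewrite map_inj_in_uniq //.
  move=> [a k] [b l] Ha Hb' E.
  have := allP Hb _ Ha; rewrite /= => /andP[/andP[? ?] ?]; have := allP Hb _ Hb'; rewrite /= => /andP[/andP[? ?] ?].
  have E1 : R i a = R i b := congr1 fst E.
  have Hab : a = b := @R_inj _ i a b (ltac:(lia)) (ltac:(lia)) E1.
  have := congr1 (fun p => val p.2) E; rewrite /= !inordK // => ->; by rewrite Hab.
have sub : {subset map F idx <= Hset 4 i 4}.
  move=> u /mapP [[a k] Hp ->]; have := allP Hb _ Hp; rewrite /= => /andP[/andP[? ?] ?]; rewrite /F R_H //=; lia.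
have : count (fun u => u \in D) (map F idx) <= #|D :&: Hset 4 i 4|.
  rewrite -size_filter -(card_uniqP (filter_uniq _ U)); apply: subset_leq_card.
  apply/subsetP => u; rewrite mem_filter => /andP[Du /sub Hu]; by rewrite inE Du Hu.
rewrite /idx /F /= addn0 !addnA. by [].
Qed.

Theorem lemma4p3 (n : nat) (Hn : 7 <= n) (D : {set 'I_n * 'I_4}) :
  total_dom [set: 'I_n * 'I_4] (@gadj n 4) D ->
  (forall i : 'I_n, 4 <= #|D :&: Hset 4 i 4|) /\
  (forall i : 'I_n,
     (forall v, v \in Hset 4 i 4 -> #|[set u in D | gadj v u]| = 1) ->
     total_dom (~: Hset 4 i 4) (Gi4adj i) (D :\: (D :&: Hset 4 i 4))).
Proof.
move=> [_ Htd]; split.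
- move=> i.
  have D20 : [|| ((R i 2, (inord 1 : 'I_4)) \in D), ((R i 2, (inord 3 : 'I_4)) \in D), ((R i 3, (inord 0 : 'I_4)) \in D) | ((R i 1, (inord 0 : 'I_4)) \in D)].
  { have [u Du Hu] := Htd (R i 2, (inord 0 : 'I_4)) (in_setT _). by have := nb_or Du Hu; rewrite oS0 oP0. }
  have D21 : [|| ((R i 2, (inord 2 : 'I_4)) \in D), ((R i 2, (inord 0 : 'I_4)) \in D), ((R i 3, (inord 1 : 'I_4)) \in D) | ((R i 1, (inord 1 : 'I_4)) \in D)].
  { have [u Du Hu] := Htd (R i 2, (inord 1 : 'I_4)) (in_setT _). by have := nb_or Du Hu; rewrite oS1 oP1. }
  have D22 : [|| ((R i 2, (inord 3 : 'I_4)) \in D), ((R i 2, (inord 1 : 'I_4)) \in D), ((R i 3, (inord 2 : 'I_4)) \in D) | ((R i 1, (inord 2 : 'I_4)) \in D)].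
  { have [u Du Hu] := Htd (R i 2, (inord 2 : 'I_4)) (in_setT _). by have := nb_or Du Hu; rewrite oS2 oP2. }
  have D23 : [|| ((R i 2, (inord 0 : 'I_4)) \in D), ((R i 2, (inord 2 : 'I_4)) \in D), ((R i 3, (inord 3 : 'I_4)) \in D) | ((R i 1, (inord 3 : 'I_4)) \in D)].
  { have [u Du Hu] := Htd (R i 2, (inord 3 : 'I_4)) (in_setT _). by have := nb_or Du Hu; rewrite oS3 oP3. }
  have D30 : [|| ((R i 3, (inord 1 : 'I_4)) \in D), ((R i 3, (inord 3 : 'I_4)) \in D), ((R i 4, (inord 0 : 'I_4)) \in D) | ((R i 2, (inord 0 : 'I_4)) \in D)].
  { have [u Du Hu] := Htd (R i 3, (inord 0 : 'I_4)) (in_setT _). by have := nb_or Du Hu; rewrite oS0 oP0. }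
  have D31 : [|| ((R i 3, (inord 2 : 'I_4)) \in D), ((R i 3, (inord 0 : 'I_4)) \in D), ((R i 4, (inord 1 : 'I_4)) \in D) | ((R i 2, (inord 1 : 'I_4)) \in D)].
  { have [u Du Hu] := Htd (R i 3, (inord 1 : 'I_4)) (in_setT _). by have := nb_or Du Hu; rewrite oS1 oP1. }
  have D32 : [|| ((R i 3, (inord 3 : 'I_4)) \in D), ((R i 3, (inord 1 : 'I_4)) \in D), ((R i 4, (inord 2 : 'I_4)) \in D) | ((R i 2, (inord 2 : 'I_4)) \in D)].
  { have [u Du Hu] := Htd (R i 3, (inord 2 : 'I_4)) (in_setT _). by have := nb_or Du Hu; rewrite oS2 oP2. }
  have D33 : [|| ((R i 3, (inord 0 : 'I_4)) \in D), ((R i 3, (inord 2 : 'I_4)) \in D), ((R i 4, (inord 3 : 'I_4)) \in D) | ((R i 2, (inord 3 : 'I_4)) \in D)].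
  { have [u Du Hu] := Htd (R i 3, (inord 3 : 'I_4)) (in_setT _). by have := nb_or Du Hu; rewrite oS3 oP3. }
  apply: leq_trans (low Hn i D). exact: spec1 D20 D21 D22 D23 D30 D31 D32 D33.
- move=> i Hex.
  have E10 := Hex _ (@HinR n Hn i 1 (inord 0) isT). rewrite cnt_eq // oS0 oP0 in E10.
  have E11 := Hex _ (@HinR n Hn i 1 (inord 1) isT). rewrite cnt_eq // oS1 oP1 in E11.
  have E12 := Hex _ (@HinR n Hn i 1 (inord 2) isT). rewrite cnt_eq // oS2 oP2 in E12.
  have E13 := Hex _ (@HinR n Hn i 1 (inord 3) isT). rewrite cnt_eq // oS3 oP3 in E13.
  have E20 := Hex _ (@HinR n Hn i 2 (inord 0) isT). rewrite cnt_eq // oS0 oP0 in E20.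
  have E21 := Hex _ (@HinR n Hn i 2 (inord 1) isT). rewrite cnt_eq // oS1 oP1 in E21.
  have E22 := Hex _ (@HinR n Hn i 2 (inord 2) isT). rewrite cnt_eq // oS2 oP2 in E22.
  have E23 := Hex _ (@HinR n Hn i 2 (inord 3) isT). rewrite cnt_eq // oS3 oP3 in E23.
  have E30 := Hex _ (@HinR n Hn i 3 (inord 0) isT). rewrite cnt_eq // oS0 oP0 in E30.
  have E31 := Hex _ (@HinR n Hn i 3 (inord 1) isT). rewrite cnt_eq // oS1 oP1 in E31.
  have E32 := Hex _ (@HinR n Hn i 3 (inord 2) isT). rewrite cnt_eq // oS2 oP2 in E32.
  have E33 := Hex _ (@HinR n Hn i 3 (inord 3) isT). rewrite cnt_eq // oS3 oP3 in E33.
  have E40 := Hex _ (@HinR n Hn i 4 (inord 0) isT). rewrite cnt_eq // oS0 oP0 in E40.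
  have E41 := Hex _ (@HinR n Hn i 4 (inord 1) isT). rewrite cnt_eq // oS1 oP1 in E41.
  have E42 := Hex _ (@HinR n Hn i 4 (inord 2) isT). rewrite cnt_eq // oS2 oP2 in E42.
  have E43 := Hex _ (@HinR n Hn i 4 (inord 3) isT). rewrite cnt_eq // oS3 oP3 in E43.
  have T00 : ((R i 1, (inord 0 : 'I_4)) \in D) -> ((R i 5, (inord 0 : 'I_4)) \in D).
  { move=> Hx; have Z := @specA0 ((R i 1, (inord 0 : 'I_4)) \in D) ((R i 1, (inord 1 : 'I_4)) \in D) ((R i 1, (inord 2 : 'I_4)) \in D) ((R i 1, (inord 3 : 'I_4)) \in D) ((R i 2, (inord 0 : 'I_4)) \in D) ((R i 2, (inord 1 : 'I_4)) \in D) ((R i 2, (inord 2 : 'I_4)) \in D) ((R i 2, (inord 3 : 'I_4)) \in D) ((R i 3, (inord 0 : 'I_4)) \in D) ((R i 3, (inord 1 : 'I_4)) \in D) ((R i 3, (inord 2 : 'I_4)) \in D) ((R i 3, (inord 3 : 'I_4)) \in D) ((R i 4, (inord 0 : 'I_4)) \in D) ((R i 4, (inord 1 : 'I_4)) \in D) ((R i 4, (inord 2 : 'I_4)) \in D) ((R i 4, (inord 3 : 'I_4)) \in D) E20 E21 E22 E23 E30 E31 E32 E33 (leq1a E10) (leq1a E11) (leq1a E12) (leq1a E13) (leq1b E40) (leq1b E41) (leq1b E42) (leq1b E43) Hx. exact: b1 (fin2 E40 Z). }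
  have T50 : ((R i 4, (inord 0 : 'I_4)) \in D) -> ((R i 0, (inord 0 : 'I_4)) \in D).
  { move=> Hx; have Z := @specB0 ((R i 1, (inord 0 : 'I_4)) \in D) ((R i 1, (inord 1 : 'I_4)) \in D) ((R i 1, (inord 2 : 'I_4)) \in D) ((R i 1, (inord 3 : 'I_4)) \in D) ((R i 2, (inord 0 : 'I_4)) \in D) ((R i 2, (inord 1 : 'I_4)) \in D) ((R i 2, (inord 2 : 'I_4)) \in D) ((R i 2, (inord 3 : 'I_4)) \in D) ((R i 3, (inord 0 : 'I_4)) \in D) ((R i 3, (inord 1 : 'I_4)) \in D) ((R i 3, (inord 2 : 'I_4)) \in D) ((R i 3, (inord 3 : 'I_4)) \in D) ((R i 4, (inord 0 : 'I_4)) \in D) ((R i 4, (inord 1 : 'I_4)) \in D) ((R i 4, (inord 2 : 'I_4)) \in D) ((R i 4, (inord 3 : 'I_4)) \in D) E20 E21 E22 E23 E30 E31 E32 E33 (leq1a E10) (leq1a E11) (leq1a E12) (leq1a E13) (leq1b E40) (leq1b E41) (leq1b E42) (leq1b E43) Hx. exact: b1 (fin1 E10 Z). }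
  have T01 : ((R i 1, (inord 1 : 'I_4)) \in D) -> ((R i 5, (inord 1 : 'I_4)) \in D).
  { move=> Hx; have Z := @specA1 ((R i 1, (inord 0 : 'I_4)) \in D) ((R i 1, (inord 1 : 'I_4)) \in D) ((R i 1, (inord 2 : 'I_4)) \in D) ((R i 1, (inord 3 : 'I_4)) \in D) ((R i 2, (inord 0 : 'I_4)) \in D) ((R i 2, (inord 1 : 'I_4)) \in D) ((R i 2, (inord 2 : 'I_4)) \in D) ((R i 2, (inord 3 : 'I_4)) \in D) ((R i 3, (inord 0 : 'I_4)) \in D) ((R i 3, (inord 1 : 'I_4)) \in D) ((R i 3, (inord 2 : 'I_4)) \in D) ((R i 3, (inord 3 : 'I_4)) \in D) ((R i 4, (inord 0 : 'I_4)) \in D) ((R i 4, (inord 1 : 'I_4)) \in D) ((R i 4, (inord 2 : 'I_4)) \in D) ((R i 4, (inord 3 : 'I_4)) \in D) E20 E21 E22 E23 E30 E31 E32 E33 (leq1a E10) (leq1a E11) (leq1a E12) (leq1a E13) (leq1b E40) (leq1b E41) (leq1b E42) (leq1b E43) Hx. exact: b1 (fin2 E41 Z). }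
  have T51 : ((R i 4, (inord 1 : 'I_4)) \in D) -> ((R i 0, (inord 1 : 'I_4)) \in D).
  { move=> Hx; have Z := @specB1 ((R i 1, (inord 0 : 'I_4)) \in D) ((R i 1, (inord 1 : 'I_4)) \in D) ((R i 1, (inord 2 : 'I_4)) \in D) ((R i 1, (inord 3 : 'I_4)) \in D) ((R i 2, (inord 0 : 'I_4)) \in D) ((R i 2, (inord 1 : 'I_4)) \in D) ((R i 2, (inord 2 : 'I_4)) \in D) ((R i 2, (inord 3 : 'I_4)) \in D) ((R i 3, (inord 0 : 'I_4)) \in D) ((R i 3, (inord 1 : 'I_4)) \in D) ((R i 3, (inord 2 : 'I_4)) \in D) ((R i 3, (inord 3 : 'I_4)) \in D) ((R i 4, (inord 0 : 'I_4)) \in D) ((R i 4, (inord 1 : 'I_4)) \in D) ((R i 4, (inord 2 : 'I_4)) \in D) ((R i 4, (inord 3 : 'I_4)) \in D) E20 E21 E22 E23 E30 E31 E32 E33 (leq1a E10) (leq1a E11) (leq1a E12) (leq1a E13) (leq1b E40) (leq1b E41) (leq1b E42) (leq1b E43) Hx. exact: b1 (fin1 E11 Z). }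
  have T02 : ((R i 1, (inord 2 : 'I_4)) \in D) -> ((R i 5, (inord 2 : 'I_4)) \in D).
  { move=> Hx; have Z := @specA2 ((R i 1, (inord 0 : 'I_4)) \in D) ((R i 1, (inord 1 : 'I_4)) \in D) ((R i 1, (inord 2 : 'I_4)) \in D) ((R i 1, (inord 3 : 'I_4)) \in D) ((R i 2, (inord 0 : 'I_4)) \in D) ((R i 2, (inord 1 : 'I_4)) \in D) ((R i 2, (inord 2 : 'I_4)) \in D) ((R i 2, (inord 3 : 'I_4)) \in D) ((R i 3, (inord 0 : 'I_4)) \in D) ((R i 3, (inord 1 : 'I_4)) \in D) ((R i 3, (inord 2 : 'I_4)) \in D) ((R i 3, (inord 3 : 'I_4)) \in D) ((R i 4, (inord 0 : 'I_4)) \in D) ((R i 4, (inord 1 : 'I_4)) \in D) ((R i 4, (inord 2 : 'I_4)) \in D) ((R i 4, (inord 3 : 'I_4)) \in D) E20 E21 E22 E23 E30 E31 E32 E33 (leq1a E10) (leq1a E11) (leq1a E12) (leq1a E13) (leq1b E40) (leq1b E41) (leq1b E42) (leq1b E43) Hx. exact: b1 (fin2 E42 Z). }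
  have T52 : ((R i 4, (inord 2 : 'I_4)) \in D) -> ((R i 0, (inord 2 : 'I_4)) \in D).
  { move=> Hx; have Z := @specB2 ((R i 1, (inord 0 : 'I_4)) \in D) ((R i 1, (inord 1 : 'I_4)) \in D) ((R i 1, (inord 2 : 'I_4)) \in D) ((R i 1, (inord 3 : 'I_4)) \in D) ((R i 2, (inord 0 : 'I_4)) \in D) ((R i 2, (inord 1 : 'I_4)) \in D) ((R i 2, (inord 2 : 'I_4)) \in D) ((R i 2, (inord 3 : 'I_4)) \in D) ((R i 3, (inord 0 : 'I_4)) \in D) ((R i 3, (inord 1 : 'I_4)) \in D) ((R i 3, (inord 2 : 'I_4)) \in D) ((R i 3, (inord 3 : 'I_4)) \in D) ((R i 4, (inord 0 : 'I_4)) \in D) ((R i 4, (inord 1 : 'I_4)) \in D) ((R i 4, (inord 2 : 'I_4)) \in D) ((R i 4, (inord 3 : 'I_4)) \in D) E20 E21 E22 E23 E30 E31 E32 E33 (leq1a E10) (leq1a E11) (leq1a E12) (leq1a E13) (leq1b E40) (leq1b E41) (leq1b E42) (leq1b E43) Hx. exact: b1 (fin1 E12 Z). }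
  have T03 : ((R i 1, (inord 3 : 'I_4)) \in D) -> ((R i 5, (inord 3 : 'I_4)) \in D).
  { move=> Hx; have Z := @specA3 ((R i 1, (inord 0 : 'I_4)) \in D) ((R i 1, (inord 1 : 'I_4)) \in D) ((R i 1, (inord 2 : 'I_4)) \in D) ((R i 1, (inord 3 : 'I_4)) \in D) ((R i 2, (inord 0 : 'I_4)) \in D) ((R i 2, (inord 1 : 'I_4)) \in D) ((R i 2, (inord 2 : 'I_4)) \in D) ((R i 2, (inord 3 : 'I_4)) \in D) ((R i 3, (inord 0 : 'I_4)) \in D) ((R i 3, (inord 1 : 'I_4)) \in D) ((R i 3, (inord 2 : 'I_4)) \in D) ((R i 3, (inord 3 : 'I_4)) \in D) ((R i 4, (inord 0 : 'I_4)) \in D) ((R i 4, (inord 1 : 'I_4)) \in D) ((R i 4, (inord 2 : 'I_4)) \in D) ((R i 4, (inord 3 : 'I_4)) \in D) E20 E21 E22 E23 E30 E31 E32 E33 (leq1a E10) (leq1a E11) (leq1a E12) (leq1a E13) (leq1b E40) (leq1b E41) (leq1b E42) (leq1b E43) Hx. exact: b1 (fin2 E43 Z). }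
  have T53 : ((R i 4, (inord 3 : 'I_4)) \in D) -> ((R i 0, (inord 3 : 'I_4)) \in D).
  { move=> Hx; have Z := @specB3 ((R i 1, (inord 0 : 'I_4)) \in D) ((R i 1, (inord 1 : 'I_4)) \in D) ((R i 1, (inord 2 : 'I_4)) \in D) ((R i 1, (inord 3 : 'I_4)) \in D) ((R i 2, (inord 0 : 'I_4)) \in D) ((R i 2, (inord 1 : 'I_4)) \in D) ((R i 2, (inord 2 : 'I_4)) \in D) ((R i 2, (inord 3 : 'I_4)) \in D) ((R i 3, (inord 0 : 'I_4)) \in D) ((R i 3, (inord 1 : 'I_4)) \in D) ((R i 3, (inord 2 : 'I_4)) \in D) ((R i 3, (inord 3 : 'I_4)) \in D) ((R i 4, (inord 0 : 'I_4)) \in D) ((R i 4, (inord 1 : 'I_4)) \in D) ((R i 4, (inord 2 : 'I_4)) \in D) ((R i 4, (inord 3 : 'I_4)) \in D) E20 E21 E22 E23 E30 E31 E32 E33 (leq1a E10) (leq1a E11) (leq1a E12) (leq1a E13) (leq1b E40) (leq1b E41) (leq1b E42) (leq1b E43) Hx. exact: b1 (fin1 E13 Z). }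
  have T0 : forall c, (R i 1, c) \in D -> (R i 5, c) \in D.
  { move=> c; case: (col_cases c) => [->|[->|[->|->]]]; [exact T00|exact T01|exact T02|exact T03]. }
  have T5 : forall c, (R i 4, c) \in D -> (R i 0, c) \in D.
  { move=> c; case: (col_cases c) => [->|[->|[->|->]]]; [exact T50|exact T51|exact T52|exact T53]. }
  clear E10 E11 E12 E13 E20 E21 E22 E23 E30 E31 E32 E33 E40 E41 E42 E43 T00 T01 T02 T03 T50 T51 T52 T53 Hex.
  have RH j c : j <= n -> ((R i j, c) \in Hset 4 i 4) = (0 < j <= 4) by apply: R_H.
  split.
    apply/subsetP => x; rewrite in_setD in_setI in_setC.
    by case: (x \in D); case: (x \in Hset 4 i 4).
  move=> v Hv; have [u Du Hu] := Htd v (in_setT _); rewrite in_setC in Hv.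
  case Hu_in: (u \in Hset 4 i 4); last first.
    exists u; first by rewrite in_setD in_setI Du Hu_in.
    by rewrite /Gi4adj Hv Hu_in Hu.
  have [j Hj Hu1] := H_dec i u.1.
  have Eu : u = (R i j, u.2) by rewrite {1}(surjective_pairing u) Hu1.
  move: Hu_in Du Hu; rewrite Eu; move: (u.2) => c; clear Eu Hu1 u.
  case/andP: Hj; case: j => // j' _ Hjn.
  rewrite RH // => /andP[_ Hj4] Du.
  rewrite gadj_sym gadjE /= RS RP.
  case/or4P => /eqP Ev; subst v.
  - by case/orP: (outH Hn Hjn Hv) => //; lia.
  - by case/orP: (outH Hn Hjn Hv) => //; lia.
  - have Hj2 : j'.+2 <= n by lia.
    case/orP: (outH Hn Hj2 Hv) => // H5.
    have Ej : j' = 3 by lia.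
    subst j'.
    exists (R i 0, c).
      by rewrite in_setD in_setI (T5 _ Du) RH.
    by rewrite /Gi4adj Hv RH //= R0v R5v eqxx !orbT.
  - have Hj0 : j' <= n by lia.
    case/orP: (outH Hn Hj0 Hv) => [/eqP Ej|H5]; last lia.
    subst j'.
    exists (R i 5, c).
      by rewrite in_setD in_setI (T0 _ Du) RH //; lia.
    by rewrite /Gi4adj Hv RH /= ?R0v ?R5v ?eqxx ?orbT //; lia.

Qed.
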